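(* Let $S=S(r_1,r_2,\ldots,r_k)$ be a starlike tree. Then: (1) if $r_i\geq 4$ for all $i$, then $GA(S)>ABC(S)$; (2) if $r_i\geq 2$ for all $i$ and $\frac{1}{k}\sum_{i=1}^{k}r_i\geq 4$, then $GA(S)>ABC(S)$; (3) if $\frac{1}{k}\sum_{i=1}^{k}r_i\geq 8$, then $GA(S)>ABC(S)$.
   Context: A starlike tree is a tree with exactly one vertex of degree greater than two. $S(r_1,\ldots,r_k)$ denotes the starlike tree having a vertex $v$ of degree $k>2$ such that deleting $v$ leaves the disjoint union of paths $P_{r_1}\cup\cdots\cup P_{r_k}$, where $P_r$ is the path on $r$ vertices and $r_1\geq r_2\geq\cdots\geq r_k\geq 1$ (so $S$ has $1+\sum r_i$ vertices). With $d_i$ the degree of vertex $v_i$, $GA(S)=\sum_{v_iv_j\in E(S)}\frac{2\sqrt{d_id_j}}{d_i+d_j}$ and $ABC(S)=\sum_{v_iv_j\in E(S)}\sqrt{\frac{d_i+d_j-2}{d_id_j}}$. *)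

(* Defs.v *)
From Stdlib Require Import Reals Lra Lia Arith List Sorted.
Import ListNotations.
Open Scope R_scope.

(* Vertices of the starlike tree S(r_1,...,r_k):
   None          = the central vertex v (of degree k),
   Some (i, j)   = the j-th vertex (1 <= j <= r_i) of the i-th branch (0-based i),
   the branch being the path  v - (i,1) - (i,2) - ... - (i,r_i). *)
Definition vertex := option (nat * nat).

Definition vertex_eqb (x y : vertex) : bool :=
  match x, y with
  | None, None => true
  | Some (a, b), Some (c, d) => andb (Nat.eqb a c) (Nat.eqb b d)
  | _, _ => false
  end.

Definition edge := (vertex * vertex)%type.

Definition branch_edges (i r : nat) : list edge :=
  (None, Some (i, 1%nat)) ::
  map (fun j => (Some (i, j), Some (i, S j))) (seq 1 (r - 1)).

Definition star_edges (rs : list nat) : list edge :=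
  concat (map (fun i => branch_edges i (nth i rs 0%nat)) (seq 0 (length rs))).

Definition degree (E : list edge) (v : vertex) : nat :=
  length (filter (fun e => orb (vertex_eqb (fst e) v) (vertex_eqb (snd e) v)) E).

Definition sum_edges (E : list edge) (f : R -> R -> R) : R :=
  fold_right (fun e acc => f (INR (degree E (fst e))) (INR (degree E (snd e))) + acc) 0 E.

Definition GA (E : list edge) : R :=
  sum_edges E (fun di dj => 2 * sqrt (di * dj) / (di + dj)).

Definition ABC (E : list edge) : R :=
  sum_edges E (fun di dj => sqrt ((di + dj - 2) / (di * dj))).

Definition sum_list_nat (rs : list nat) : nat := fold_right Nat.add 0%nat rs.

Example ex_deg : map (fun e => (degree (star_edges [2;1;1]%nat) (fst e), degree (star_edges [2;1;1]%nat) (snd e))) (star_edges [2;1;1]%nat) = [(3,2);(2,1);(3,1);(3,1)]%nat.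
Proof. reflexivity. Qed.

(* Main.v *)
Require Import Defs.
From Stdlib Require Import Reals Lra Lia Arith List Sorted.
Import ListNotations.
Open Scope R_scope.

Fixpoint sumR {A} (F : A -> R) (l : list A) : R :=
  match l with [] => 0 | x :: t => F x + sumR F t end.

Lemma sumR_app {A} (F : A -> R) l1 l2 : sumR F (l1 ++ l2) = sumR F l1 + sumR F l2.
Proof. induction l1; simpl; [lra| rewrite IHl1; lra]. Qed.

Lemma sumR_ext {A} (F G : A -> R) l : (forall x, In x l -> F x = G x) -> sumR F l = sumR G l.
Proof. induction l; simpl; intros H; auto. rewrite H, IHl; auto. Qed.

Lemma sumR_map {A B} (F : B -> R) (g : A -> B) l : sumR F (map g l) = sumR (fun x => F (g x)) l.
Proof. induction l; simpl; auto. rewrite IHl; auto. Qed.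

Lemma sumR_concat {A} (F : A -> R) (G : nat -> list A) l :
  sumR F (concat (map G l)) = sumR (fun i => sumR F (G i)) l.
Proof. induction l; simpl; auto. rewrite sumR_app, IHl; auto. Qed.

Lemma sumR_const {A} (F : A -> R) l c : (forall x, In x l -> F x = c) -> sumR F l = INR (length l) * c.
Proof. induction l; simpl; intros H. lra. rewrite H, IHl by auto. destruct (length l); simpl; lra. Qed.

Definition phi (x y : R) := 2 * sqrt (x*y)/(x+y) - sqrt ((x+y-2)/(x*y)).

Lemma GA_ABC E : GA E - ABC E = sumR (fun e => phi (INR (degree E (fst e))) (INR (degree E (snd e)))) E.
Proof.
  unfold GA, ABC, sum_edges, phi. set (D := degree E). clearbody D.
  induction E; simpl; [lra|]. rewrite <- IHE. lra.
Qed.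

Lemma len_filter_concat {A} (p : A -> bool) (F : nat -> list A) l :
  length (filter p (concat (map F l))) = fold_right (fun i acc => (length (filter p (F i)) + acc)%nat) 0%nat l.
Proof. induction l; simpl; auto. rewrite filter_app, length_app, IHl; auto. Qed.

Ltac bcase := repeat match goal with
  | |- context [Nat.leb ?x ?y] => destruct (Nat.leb_spec x y)
  | |- context [Nat.ltb ?x ?y] => destruct (Nat.ltb_spec x y)
  | |- context [Nat.eqb ?x ?y] => destruct (Nat.eqb_spec x y)
  end; cbn [andb orb]; try lia.

Lemma sum_single (G : nat -> nat) i a n : (forall j, j <> i -> G j = 0%nat) ->
  fold_right (fun j acc => (G j + acc)%nat) 0%nat (seq a n) =
  if andb (a <=? i) (i <? a + n) then G i else 0%nat.
Proof.
  intros HG. revert a; induction n; intros a; simpl.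
  - bcase.
  - rewrite IHn. destruct (Nat.eq_dec a i).
    + subst. bcase.
    + rewrite HG by auto. bcase.
Qed.

Lemma sum_one a n : fold_right (fun j acc => (1 + acc)%nat) 0%nat (seq a n) = n.
Proof. revert a; induction n; intros a; simpl; auto. Qed.

Definition pv (v : vertex) := fun e : edge => orb (vertex_eqb (fst e) v) (vertex_eqb (snd e) v).

Lemma branch_None i r : length (filter (pv None) (branch_edges i r)) = 1%nat.
Proof.
  unfold branch_edges. simpl. try f_equal. induction (seq 1 (r-1)); simpl; auto.
Qed.

Lemma fold_ext (G G' : nat -> nat) l : (forall i, In i l -> G i = G' i) ->
  fold_right (fun j acc => (G j + acc)%nat) 0%nat l = fold_right (fun j acc => (G' j + acc)%nat) 0%nat l.
Proof. induction l as [|a l IHl]; simpl; intros H; [reflexivity|]. rewrite (H a (or_introl eq_refl)), IHl; auto. Qed.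

Lemma deg_None rs : degree (star_edges rs) None = length rs.
Proof.
  unfold degree, star_edges. fold (pv None). rewrite len_filter_concat.
  rewrite (fold_ext _ (fun _ => 1%nat)).
  - apply sum_one.
  - intros; apply branch_None.
Qed.

Lemma branch_other i' i j r : i' <> i -> length (filter (pv (Some (i,j))) (branch_edges i' r)) = 0%nat.
Proof.
  intros H. unfold branch_edges, pv. simpl.
  assert (E : (i' =? i) = false) by (apply Nat.eqb_neq; auto). rewrite E. simpl.
  induction (seq 1 (r-1)); simpl; auto. rewrite E; simpl; auto.
Qed.

Lemma map_count i j a n :
  length (filter (pv (Some (i,j))) (map (fun x => (Some (i,x), Some (i, S x))) (seq a n))) =
  ((if andb (a <=? j) (j <? a + n) then 1 else 0) +
   (if andb (1 <=? j) (andb (a <=? j - 1) (j - 1 <? a + n)) then 1 else 0))%nat.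
Proof.
  revert a; induction n; intros a.
  - cbn [seq map filter length]. bcase.
  - cbn [seq map filter length]. unfold pv at 1; cbn [vertex_eqb fst snd]. rewrite Nat.eqb_refl. cbn [andb].
    destruct (Nat.eqb_spec a j), (Nat.eqb_spec (S a) j); cbn [orb length]; rewrite IHn; bcase.
Qed.

Lemma branch_self i j r : (1 <= r)%nat -> (1 <= j <= r)%nat ->
  length (filter (pv (Some (i,j))) (branch_edges i r)) =
  (if r =? 1 then 1 else if j =? r then 1 else 2)%nat.
Proof.
  intros Hr Hj. unfold branch_edges. cbn [filter].
  unfold pv at 1; cbn [vertex_eqb fst snd orb]. rewrite Nat.eqb_refl. cbn [andb].
  destruct (Nat.eqb_spec 1 j); cbn [length]; fold (pv (Some (i,j))); rewrite map_count; bcase.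
Qed.

Lemma deg_Some rs i j : (i < length rs)%nat -> (1 <= nth i rs 0%nat)%nat -> (1 <= j <= nth i rs 0%nat)%nat ->
  degree (star_edges rs) (Some (i,j)) =
  (if nth i rs 0%nat =? 1 then 1 else if j =? nth i rs 0%nat then 1 else 2)%nat.
Proof.
  intros Hi Hr Hj.
  unfold degree, star_edges. fold (pv (Some (i,j))). rewrite len_filter_concat.
  rewrite (sum_single _ i).
  - cbv beta. pose proof (branch_self i j (nth i rs 0%nat) Hr Hj) as B. rewrite <- B. destruct (Nat.leb_spec 0 i); [|lia]. destruct (Nat.ltb_spec i (0 + length rs)); [|lia]. reflexivity.
  - intros; apply branch_other; auto.
Qed.

Definition Dk (K : R) (r : nat) : R :=
  if r =? 1 then phi K 1 else phi K 2 + INR (r-2) * phi 2 2 + phi 2 1.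

Lemma branch_sum rs i : (i < length rs)%nat -> (1 <= nth i rs 0%nat)%nat ->
  sumR (fun e => phi (INR (degree (star_edges rs) (fst e))) (INR (degree (star_edges rs) (snd e))))
    (branch_edges i (nth i rs 0%nat)) = Dk (INR (length rs)) (nth i rs 0%nat).
Proof.
  intros Hi Hr. unfold branch_edges. cbn [sumR fst snd].
  rewrite deg_None, deg_Some by lia.
  unfold Dk.
  destruct (nth i rs 0%nat) as [|[|m]] eqn:Er; [lia| |].
  - cbn. lra.
  - replace (S (S m) - 1)%nat with (S m) by lia. rewrite seq_S, map_app, sumR_app.
    rewrite (sumR_const _ _ (phi 2 2)).
    + rewrite length_map, length_seq. cbn [map sumR fst snd].
      rewrite !deg_Some by (rewrite ?Er; lia). rewrite !Er.
      replace (S (S m) - 2)%nat with m by lia.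
      bcase. replace (INR 2) with 2 by (simpl; lra). replace (INR 1) with 1 by (simpl; lra). lra.
    + intros x Hx. apply in_map_iff in Hx. destruct Hx as [y [<- Hy]]. apply in_seq in Hy.
      cbn [fst snd]. rewrite !deg_Some by (rewrite ?Er; lia). rewrite !Er. bcase.
      replace (INR 2) with 2 by (simpl; lra). reflexivity.
Qed.

Lemma sqrt_lt_bound x a : 0 <= x -> 0 < a -> x < a*a -> sqrt x < a.
Proof. intros H0 Ha H. pose proof (sqrt_sqrt x H0). pose proof (sqrt_pos x). nra. Qed.
Lemma sqrt_gt_bound x a : 0 <= a -> a*a < x -> a < sqrt x.
Proof. intros Ha H. assert (0 <= x) by nra. pose proof (sqrt_sqrt x H0). pose proof (sqrt_pos x). nra. Qed.

Lemma Dk_bound K r : 3 <= K -> (1 <= r)%nat ->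
  Dk K r > -1 /\ ((2 <= r)%nat -> Dk K r > 0.29 * INR r - 1.06).
Proof.
  intros HK Hr. set (u := sqrt (1/2)).
  assert (Hu : u < 0.71) by (apply sqrt_lt_bound; lra).
  assert (Hu0 : 0 <= u) by apply sqrt_pos.
  assert (H2 : 1.41 < sqrt 2) by (apply sqrt_gt_bound; lra).
  assert (P22 : phi 2 2 = 1 - u).
  { unfold phi, u. replace (2*2) with (2*2) by lra. rewrite sqrt_square by lra.
    replace ((2+2-2)/(2*2)) with (1/2) by field. field. }
  assert (P21 : phi 2 1 = 2 * sqrt 2 / 3 - u).
  { unfold phi, u. replace (2*1) with 2 by lra. replace ((2+1-2)/2) with (1/2) by field.
    replace (2+1) with 3 by lra. reflexivity. }
  assert (PK2 : phi K 2 > - u).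
  { unfold phi, u. replace ((K+2-2)/(K*2)) with (1/2) by (field; lra).
    assert (0 < sqrt (K*2)) by (apply sqrt_lt_R0; nra).
    assert (0 < 2 * sqrt (K*2) / (K+2)) by (apply Rdiv_lt_0_compat; lra). lra. }
  assert (PK1 : phi K 1 > -1).
  { unfold phi.
    assert (0 < sqrt (K*1)) by (apply sqrt_lt_R0; nra).
    assert (0 < 2 * sqrt (K*1) / (K+1)) by (apply Rdiv_lt_0_compat; lra).
    assert (sqrt ((K+1-2)/(K*1)) < 1).
    { apply sqrt_lt_bound; try lra.
      - unfold Rdiv; apply Rmult_le_pos; [lra| left; apply Rinv_0_lt_compat; nra].
      - apply (Rmult_lt_reg_r (K*1)); [nra|]. unfold Rdiv. rewrite Rmult_assoc, Rinv_l by nra. nra. }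
    lra. }
  unfold Dk. destruct (Nat.eqb_spec r 1).
  - subst. split; [lra| intros; lia].
  - assert (Hm : (2 <= r)%nat) by lia.
    rewrite P22, P21.
    assert (INR r = INR (r-2) + 2) by (rewrite <- (Nat.sub_add 2 r) at 1 by lia; rewrite plus_INR; simpl; lra).
    assert (0 <= INR (r-2)) by apply pos_INR.
    assert (INR (r-2) * (1-u) >= 0.29 * INR (r-2)) by nra.
    split; [|intros]; nra.
Qed.

Lemma map_nth_seq (rs : list nat) : map (fun i => nth i rs 0%nat) (seq 0 (length rs)) = rs.
Proof.
  induction rs as [|a rs IH]; simpl; auto. f_equal.
  rewrite <- seq_shift, map_map. simpl. exact IH.
Qed.

Lemma sumR_star h rs : sumR h (star_edges rs) =
  sumR (fun i => sumR h (branch_edges i (nth i rs 0%nat))) (seq 0 (length rs)).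
Proof. unfold star_edges. apply sumR_concat. Qed.

Lemma total rs : Forall (fun r => (1 <= r)%nat) rs ->
  GA (star_edges rs) - ABC (star_edges rs) = sumR (Dk (INR (length rs))) rs.
Proof.
  intros HF. rewrite GA_ABC, sumR_star.
  rewrite (sumR_ext _ (fun i => Dk (INR (length rs)) (nth i rs 0%nat))).
  - rewrite <- (sumR_map (Dk (INR (length rs))) (fun i => nth i rs 0%nat)).
    rewrite map_nth_seq. reflexivity.
  - intros i Hi. apply in_seq in Hi. apply branch_sum; [lia|].
    rewrite Forall_forall in HF. apply HF, nth_In. lia.
Qed.

Lemma sumR_lt {A} (F G : A -> R) l : l <> [] -> (forall x, In x l -> F x > G x) -> sumR F l > sumR G l.
Proof.
  induction l as [|a l IH]; intros Hl H; [congruence|]. simpl.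
  destruct l as [|b l'].
  - simpl. specialize (H a (or_introl eq_refl)). lra.
  - assert (sumR F (b :: l') > sumR G (b :: l')) by (apply IH; [congruence| intros; apply H; right; auto]).
    specialize (H a (or_introl eq_refl)). lra.
Qed.

Lemma sumR_lin c t rs : sumR (fun r => c * (INR r - t)) rs = c * (INR (sum_list_nat rs) - t * INR (length rs)).
Proof.
  induction rs as [|a rs IH]; cbn [sumR length]; [simpl; lra|].
  change (sum_list_nat (a::rs)) with (a + sum_list_nat rs)%nat. rewrite IH, plus_INR, S_INR. ring.
Qed.

Lemma sumR_zero {A} (l : list A) : sumR (fun _ => 0) l = 0.
Proof. induction l; simpl; lra. Qed.

Theorem theorem3p9 (rs : list nat) :
  (2 < length rs)%nat ->
  Sorted (fun a b => (b <= a)%nat) rs ->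
  Forall (fun r => (1 <= r)%nat) rs ->
  (Forall (fun r => (4 <= r)%nat) rs ->
     GA (star_edges rs) > ABC (star_edges rs)) /\
  (Forall (fun r => (2 <= r)%nat) rs ->
     INR (sum_list_nat rs) / INR (length rs) >= 4 ->
     GA (star_edges rs) > ABC (star_edges rs)) /\
  (INR (sum_list_nat rs) / INR (length rs) >= 8 ->
     GA (star_edges rs) > ABC (star_edges rs)).
Proof.
  intros Hk _ H1.
  pose proof (total rs H1) as HT.
  assert (HK : 3 <= INR (length rs)) by (replace 3 with (INR 3) by (simpl; lra); apply le_INR; lia).
  assert (Hne : rs <> []) by (intro E; subst; simpl in Hk; lia).
  rewrite Forall_forall in H1.
  assert (Kpos : 0 < INR (length rs)) by lra.
  split; [|split].
  - intros H4. rewrite Forall_forall in H4.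
    assert (sumR (Dk (INR (length rs))) rs > sumR (fun _ => 0) rs).
    { apply sumR_lt; auto. intros x Hx.
      destruct (Dk_bound _ x HK (H1 x Hx)) as [_ B].
      specialize (H4 x Hx). assert (4 <= INR x) by (replace 4 with (INR 4) by (simpl; lra); apply le_INR; lia).
      specialize (B ltac:(lia)). lra. }
    rewrite sumR_zero in H. lra.
  - intros H2 Havg. rewrite Forall_forall in H2.
    assert (sumR (Dk (INR (length rs))) rs > sumR (fun r => 0.29 * (INR r - 4)) rs).
    { apply sumR_lt; auto. intros x Hx.
      destruct (Dk_bound _ x HK (H1 x Hx)) as [_ B].
      specialize (B (H2 x Hx)). lra. }
    rewrite sumR_lin in H.
    assert (INR (sum_list_nat rs) = INR (sum_list_nat rs) / INR (length rs) * INR (length rs)) by (field; lra).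
    nra.
  - intros Havg.
    assert (sumR (Dk (INR (length rs))) rs > sumR (fun r => 0.29 * (INR r - 8)) rs).
    { apply sumR_lt; auto. intros x Hx.
      destruct (Dk_bound _ x HK (H1 x Hx)) as [A B].
      destruct (Nat.eq_dec x 1).
      + subst. simpl. lra.
      + assert (HB := B ltac:(specialize (H1 x Hx); lia)). lra. }
    rewrite sumR_lin in H.
    assert (INR (sum_list_nat rs) = INR (sum_list_nat rs) / INR (length rs) * INR (length rs)) by (field; lra).
    nra.
Qed.
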